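(* Let $m > 1$ be an integer, and let $\lambda = (\lambda_1, \ldots, \lambda_m)$ be a sequence of integers with $\lambda_1 \geq \cdots \geq \lambda_m > 0$ and $\lambda_1 > 1$. Define the sequence $\mu = (\mu_1, \ldots, \mu_{2m - 1})$ by \[\mu_{k} = \max_{\substack{1 \le i, j \le m\\ i + j - 1 = k}} (\lambda_i + \lambda_j - 1)\] for $1 \leq k \leq 2m-1$. Then \[\sum_{k=1}^{2m-1} \mu_k \geq 3\left(\sum_{k=1}^m \lambda_k\right) - 3.\] *)

(* Defs.v *)
From mathcomp Require Import all_boot.
Set Implicit Arguments. Unset Strict Implicit. Unset Printing Implicit Defensive.

(* Indices are 0-based: lambda i for i < m corresponds to lambda_{i+1}.
   mu k (k < 2m-1) corresponds to mu_{k+1}: max over i,j < m with i + j = k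
   (0-based version of i + j - 1 = k) of lambda_i + lambda_j - 1.
   Since all lambda_i >= 1, the truncated nat subtraction is exact. *)
Definition mu (m : nat) (lambda : nat -> nat) (k : nat) : nat :=
  \max_(i < m) \max_(j < m | i + j == k) (lambda i + lambda j - 1).

(* Main.v *)
Require Import Defs.
From mathcomp Require Import all_boot.
From mathcomp Require Import zify.
Set Implicit Arguments.

Section S.
Variables (m : nat) (lambda : nat -> nat).
Hypothesis Hpos : forall i, i < m -> 0 < lambda i.
Hypothesis Hmon : forall i j, i <= j < m -> lambda j <= lambda i.
Local Notation mu := (mu m lambda).

Lemma mu_ge i j : i < m -> j < m -> lambda i + lambda j <= mu (i + j) + 1.
Proof.
move=> Hi Hj.
have H1 := @leq_bigmax_cond _ (fun j0 : 'I_m => (Ordinal Hi) + j0 == i + j)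
  (fun j0 : 'I_m => lambda (Ordinal Hi) + lambda j0 - 1) (Ordinal Hj) (eqxx _).
have H2 := @leq_bigmax _ (fun i0 : 'I_m => \max_(j0 < m | i0 + j0 == i + j)
  (lambda i0 + lambda j0 - 1)) (Ordinal Hi).
simpl in H1, H2; have := Hpos i Hi; rewrite /Defs.mu.
set X := \max_(j0 < m | i + j0 == i + j) _ in H1 H2. set Y := \max_(_ < m) _ in H2 *. lia.
Qed.

Lemma part1 t : t < m ->
  4 * \sum_(0 <= i < t.+1) lambda i <=
  \sum_(0 <= k < (2 * t).+1) (mu k + 1) + lambda 0 + lambda t.
Proof.
elim: t => [|t IH] Ht.
  rewrite !big_nat1; have := mu_ge 0 0 Ht Ht.
  rewrite addn0; lia.
have Ht' : t < m by lia.
have IH' := IH Ht'.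
rewrite (_ : (2 * t.+1).+1 = ((2 * t).+1).+1.+1); last by lia.
have e1 : \sum_(0 <= i < t.+2) lambda i = \sum_(0 <= i < t.+1) lambda i + lambda t.+1.
  by rewrite big_nat_recr.
have e2 : \sum_(0 <= k < ((2 * t).+1).+2) (mu k + 1) = \sum_(0 <= k < (2 * t).+1) (mu k + 1)
   + (mu (2 * t).+1 + 1) + (mu (2 * t).+2 + 1).
  by rewrite big_nat_recr // big_nat_recr.
rewrite e1 e2.
have A := mu_ge t t.+1 Ht' Ht. have B := mu_ge t.+1 t.+1 Ht Ht.
rewrite (_ : t + t.+1 = (2 * t).+1) in A; last by lia.
rewrite (_ : t.+1 + t.+1 = (2 * t).+2) in B; last by lia.
lia.
Qed.

Lemma part2 t n : t + 1 + n <= m ->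
  \sum_(t + 1 <= j < t + 1 + n) (lambda t + lambda j) <=
  \sum_(2 * t + 1 <= k < 2 * t + 1 + n) (mu k + 1).
Proof.
elim: n => [|n IH] H.
  by rewrite !addn0 !big_geq.
rewrite (_ : t + 1 + n.+1 = (t + 1 + n).+1); last by lia.
rewrite (_ : 2 * t + 1 + n.+1 = (2 * t + 1 + n).+1); last by lia.
rewrite big_nat_recr ?leq_addr // [X in _ <= X]big_nat_recr ?leq_addr //=.
have := IH ltac:(lia).
have := @mu_ge t (t + 1 + n) ltac:(lia) ltac:(lia).
rewrite (_ : t + (t + 1 + n) = 2 * t + 1 + n); last by lia.
lia.
Qed.

Lemma part3 t n : t + 1 + n <= m ->
  \sum_(t + 1 <= i < t + 1 + n) (lambda i + lambda (m - 1)) <=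
  \sum_(m + t <= k < m + t + n) (mu k + 1).
Proof.
elim: n => [|n IH] H.
  by rewrite !addn0 !big_geq.
rewrite (_ : t + 1 + n.+1 = (t + 1 + n).+1); last by lia.
rewrite (_ : m + t + n.+1 = (m + t + n).+1); last by lia.
rewrite big_nat_recr ?leq_addr // [X in _ <= X]big_nat_recr ?leq_addr //=.
have := IH ltac:(lia).
have := @mu_ge (t + 1 + n) (m - 1) ltac:(lia) ltac:(lia).
rewrite (_ : t + 1 + n + (m - 1) = m + t + n); last by lia.
lia.
Qed.

Lemma partS t : t < m -> lambda 0 + t * lambda t <= \sum_(0 <= i < t.+1) lambda i.
Proof.
elim: t => [|t IH] Ht.
  by rewrite big_nat1 mul0n addn0.
rewrite big_nat_recr //=.
have := IH ltac:(lia). have := Hmon (t) (t.+1) ltac:(lia).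
move=> h1 h2. have : t * lambda t.+1 <= t * lambda t by rewrite leq_mul2l h1 orbT.
lia.
Qed.

Lemma partB t : t.+1 < m -> lambda t.+1 < lambda t ->
  \sum_(t + 1 <= j < m) lambda j <= (m - 2 - t) * (lambda t - 1) + lambda (m - 1).
Proof.
move=> Htm Hd.
have -> : \sum_(t + 1 <= j < m) lambda j = \sum_(t + 1 <= j < (m - 1).+1) lambda j.
  by rewrite (_ : (m - 1).+1 = m) //; lia.
rewrite big_nat_recr /=; last by lia.
suff : \sum_(t + 1 <= j < m - 1) lambda j <= \sum_(t + 1 <= j < m - 1) (lambda t - 1).
  rewrite sum_nat_const_nat (_ : m - 1 - (t + 1) = m - 2 - t); last by lia.
  lia.
rewrite big_seq [X in _ <= X]big_seq; apply: leq_sum => j.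
rewrite mem_index_iota => Hj.
have := Hmon (t.+1) (j) ltac:(lia). lia.
Qed.

Lemma core t : t < m -> 1 < m -> 2 <= lambda t -> 2 <= lambda 0 ->
  (t.+1 < m -> lambda t.+1 < lambda t) ->
  3 * (\sum_(i < m) lambda i) - 3 <= \sum_(k < (2 * m - 1)) mu k.
Proof.
move=> Ht Hm H2 H0 Hd.
have E1 : \sum_(k < (2 * m - 1)) mu k + (2 * m - 1) =
          \sum_(0 <= k < 2 * m - 1) (mu k + 1).
  rewrite big_split /= sum_nat_const_nat big_mkord. by rewrite subn0 muln1.
rewrite (big_cat_nat _ (n := (2 * t).+1)) /= in E1; [|lia|lia].
rewrite (@big_cat_nat _ _ _ (m + t) (2 * t).+1 (2 * m - 1)) /= in E1; [|lia|lia].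
rewrite -(big_mkord xpredT lambda) (big_cat_nat _ (n := t.+1)) //=.
have P1 := part1 t Ht.
have P2 := @part2 t (m - (t + 1)) ltac:(lia).
have P3 := @part3 t (m - (t + 1)) ltac:(lia).
rewrite (_ : t + 1 + (m - (t + 1)) = m) in P2 P3; last by lia.
rewrite (_ : 2 * t + 1 + (m - (t + 1)) = m + t) in P2; last by lia.
rewrite (_ : m + t + (m - (t + 1)) = 2 * m - 1) in P3; last by lia.
rewrite (_ : 2 * t + 1 = (2 * t).+1) in P2; last by lia.
rewrite big_split /= sum_nat_const_nat in P2.
rewrite big_split /= sum_nat_const_nat in P3.
rewrite (_ : t + 1 = t.+1) in P2 P3; last by lia.
have HS := partS t Ht.
have Hl1 := Hpos (m - 1) ltac:(lia).
have Hlt := Hmon t (m - 1) ltac:(lia).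
have Hl0 := Hmon 0 t ltac:(lia).
case: (ltnP t.+1 m) => Htm.
  have HB := partB t Htm (Hd Htm).
  rewrite (_ : t + 1 = t.+1) in HB; last by lia.
  move: E1 P1 P2 P3 HS HB.
  set M1 := \sum_(0 <= k < (2 * t).+1) (mu k + 1).
  set M2 := \sum_((2 * t).+1 <= k < m + t) (mu k + 1).
  set M3 := \sum_(m + t <= k < 2 * m - 1) (mu k + 1).
  set St := \sum_(0 <= i < t.+1) lambda i.
  set B := \sum_(t.+1 <= i < m) lambda i.
  set M := \sum_(k < 2 * m - 1) mu k.
  move=> E1 P1 P2 P3 HS HB.
  have Hb1 : 1 <= lambda (m - 1) by [].
  move: E1 P1 P2 P3 HS HB.
  have -> : m - t.+1 = (m - 2 - t).+1 by lia.
  have : m = t + 2 + (m - 2 - t) by lia.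
  move: (m - 2 - t) => s Hs.
  move: (lambda t) (lambda (m - 1)) (lambda 0) H2 Hb1 => a b c Ha Hb.
  rewrite !mulSn mulnBr muln1.
  have : 2 * t <= t * a by rewrite [2 * t]mulnC leq_mul.
  have : s <= s * b by rewrite -{1}(muln1 s) leq_mul.
  have : s <= s * a by rewrite -{1}(muln1 s) leq_mul // ltnW.
  lia.
have Et : t = m - 1 by lia.
rewrite [\sum_(t.+1 <= i < m) _]big_geq; last by lia.
rewrite [\sum_((2 * t).+1 <= i < m + t) _]big_geq in E1; last by lia.
rewrite [\sum_(m + t <= i < 2 * m - 1) _]big_geq in E1; last by lia.
move: E1 P1 HS.
set M1 := \sum_(0 <= k < (2 * t).+1) (mu k + 1).
set St := \sum_(0 <= i < t.+1) lambda i.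
set M := \sum_(k < 2 * m - 1) mu k.
move: (lambda t) (lambda 0) H2 => a c Ha.
have : 2 * (t - 1) <= (t - 1) * a by rewrite [2 * _]mulnC leq_mul.
have : (t - 1) * a + a = t * a.
  by rewrite addnC -mulSn; congr (_ * _); lia.
lia.
Qed.

End S.

Theorem lemmaA1 (m : nat) (lambda : nat -> nat) :
  1 < m ->
  (forall i j, i <= j < m -> lambda j <= lambda i) ->
  (forall i, i < m -> 0 < lambda i) ->
  1 < lambda 0 ->
  \sum_(k < (2 * m - 1)) mu m lambda k >= 3 * (\sum_(i < m) lambda i) - 3.
Proof.
move=> Hm Hmon Hpos H0.
case: (boolP [exists t : 'I_(m - 1), lambda (val t).+1 < lambda t]).
  case/existsP=> [[t Ht]] /= Hd.
  apply: (@core m lambda Hpos Hmon t) => //; try lia.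
  have := Hpos t.+1 ltac:(lia); lia.
move/existsPn => Hn.
have Hc : forall i, i < m -> lambda i = lambda 0.
  elim=> [//|i IH] Hi.
  have := Hn (Ordinal (_ : i < m - 1)).
  have Hi' : i < m - 1 by lia.
  move=> /(_ Hi') /=; rewrite -leqNgt => h.
  have := Hmon i i.+1 ltac:(lia). have := IH ltac:(lia). lia.
apply: (@core m lambda Hpos Hmon (m - 1)); try lia.
  by rewrite Hc //; lia.
Qed.
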